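(* Let $r\ge 1$ and $n\ge 3r+6$ be integers. Then $\rho(K_{3,n-3})>\rho(H'_{n,r})$.
   Context: $\rho$ denotes the spectral radius (largest adjacency eigenvalue). $K_1\vee rK_3$ is the join of a single vertex with $r$ disjoint triangles; let $u$ be its vertex of degree $3r$ (any vertex if $r=1$). In $K_{3,n-3r-3}$ (complete bipartite with parts of sizes $3$ and $n-3r-3$), let $vw$ be an edge where $v$ has degree $n-3r-3$ and $w$ has degree $3$. $H'_{n,r}$ is the graph obtained from the disjoint union of $K_1\vee rK_3$ and $K_{3,n-3r-3}$ by identifying $u$ with $w$. *)

(* Defs.v *)
From HB Require Import structures.
From mathcomp Require Import all_boot all_order all_algebra.
From mathcomp Require Import polyrcf.
Set Implicit Arguments. Unset Strict Implicit. Unset Printing Implicit Defensive.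
Import Order.TTheory GRing.Theory Num.Theory.
Local Open Scope ring_scope.

Definition adjmx (R : nzRingType) (n : nat) (e : nat -> nat -> bool) : 'M[R]_n :=
  \matrix_(i < n, j < n) (e i j)%:R.

(* Spectral radius = largest (real) eigenvalue of a real-closed-field matrix:
   the maximum of the real roots of its characteristic polynomial.
   (The adjacency matrices considered are symmetric, so all eigenvalues are real
   and the spectrum is nonempty; the default 0 is never the binding value since
   the largest eigenvalue of an adjacency matrix is >= 0.) *)
Definition spec_radius (R : rcfType) (n : nat) (A : 'M[R]_n) : R :=
  \big[Num.max/0]_(x <- rootsR (char_poly A)) x.

Definition K3_edge (i j : nat) : bool :=
  ((i < 3) && (3 <= j))%N || ((j < 3) && (3 <= i))%N.

(* H'_{n,r} on {0,...,n-1}: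
   - vertex 0 is u = w (centre of K_1 v rK_3, and a degree-3 vertex of K_{3,n-3r-3});
   - vertices 1..3r form the r triangles {3k+1,3k+2,3k+3}, k < r, all joined to 0;
   - K_{3,n-3r-3} has the 3-part {3r+1,3r+2,3r+3} and the (n-3r-3)-part
     {0} u {3r+4,...,n-1}. *)
Definition tri_vx (r i : nat) : bool := (1 <= i <= 3 * r)%N.
Definition bipA (r i : nat) : bool := (3 * r + 1 <= i <= 3 * r + 3)%N.
Definition bipB (r i : nat) : bool := (i == 0)%N || (3 * r + 4 <= i)%N.

Definition Hp_edge (r : nat) (i j : nat) : bool :=
  [|| (i == 0)%N && tri_vx r j,
      (j == 0)%N && tri_vx r i,
      [&& tri_vx r i, tri_vx r j, i != j & (i.-1 %/ 3 == j.-1 %/ 3)%N],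
      bipA r i && bipB r j
    | bipA r j && bipB r i].

(* Main.v *)
Require Import Defs.
From HB Require Import structures.
From mathcomp Require Import all_boot all_order all_algebra.
From mathcomp Require Import polyrcf.
From mathcomp Require Import zify ring lra.
Import Order.TTheory GRing.Theory Num.Theory.
Local Open Scope ring_scope.

Lemma le_bigmax_seq (R : rcfType) (s : seq R) x :
  x \in s -> x <= \big[Num.max/0]_(y <- s) y.
Proof.
elim: s => //= a s IH; rewrite in_cons big_cons => /orP[/eqP->|/IH h].
  by rewrite le_max lexx.
by rewrite le_max h orbT.
Qed.

Lemma bigmax_lt (R : rcfType) (s : seq R) mu :
  0 < mu -> (forall x, x \in s -> x < mu) -> \big[Num.max/0]_(y <- s) y < mu.
Proof.
elim: s => [|a s IH] h0 hs; rewrite ?big_nil // big_cons gt_max hs ?mem_head ?IH //.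
by move=> x hx; apply hs; rewrite in_cons hx orbT.
Qed.

Lemma eig_bound (R : rcfType) n (A : 'M[R]_n) (w : 'I_n -> R) (mu x : R) :
 (forall i j, 0 <= A i j) -> (forall i, 0 < w i) ->
 (forall j, \sum_i w i * A i j < mu * w j) -> eigenvalue A x -> `|x| < mu.
Proof.
move=> A0 w0 hw /eigenvalueP [v hv vn0].
have [i0 hi0] : exists i, v 0 i != 0.
  case: (pickP (fun i => v 0 i != 0)) => [i hi|h]; first by exists i.
  by move: vn0; case/negP; apply/eqP/rowP => j; rewrite mxE; move: (h j) => /negbFE/eqP.
pose F := fun i => `|v 0 i| / w i.
case: (@arg_maxP _ R _ i0 xpredT F isT) => j _ hj.
set t := F j.
have ht : forall i, `|v 0 i| <= t * w i.
  by move=> i; rewrite -ler_pdivrMr //; apply: hj.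
have tpos : 0 < t.
  apply: (lt_le_trans _ (hj i0 isT)).
  by rewrite /F divr_gt0 ?normr_gt0.
have vj : `|v 0 j| = t * w j by rewrite /t /F divfK // gt_eqF.
have key : `|x| * `|v 0 j| <= t * \sum_i w i * A i j.
  have e : (v *m A) 0 j = (x *: v) 0 j by rewrite hv.
  move: e; rewrite !mxE => e.
  rewrite -normrM -e mulr_sumr; apply: le_trans (ler_norm_sum _ _ _) _.
  apply: ler_sum => i _; rewrite normrM (ger0_norm (A0 i j)) mulrA.
  by apply: ler_wpM2r.
have : `|x| * `|v 0 j| < mu * `|v 0 j|.
  apply: (le_lt_trans key); rewrite vj mulrCA ltr_pM2l //.
rewrite ltr_pM2r // normr_gt0 -normr_gt0 vj mulr_gt0 //.
Qed.

Definition wf (R : rcfType) (r : nat) (lam N : R) (i : nat) : R :=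
  if (i == 0)%N then 18%:R * r%:R * lam else if tri_vx r i then 3 * N
  else if bipA r i then 2 * (N - 1) else 6 * lam.
Arguments wf {R}.

Lemma sum_piece (R : rcfType) a b (W : nat -> R) (E : nat -> bool) c e :
  (forall i, (a <= i < b)%N -> W i = c) -> (forall i, (a <= i < b)%N -> E i = e) ->
  \sum_(a <= i < b) W i * (E i)%:R = (c * e%:R) * (b - a)%:R.
Proof. by move=> hW hE; rewrite mulr_natr -sumr_const_nat; apply: eq_big_nat => i hi; rewrite hW ?hE. Qed.

Lemma mid3 (R : rcfType) (F : nat -> R) m b j c : b = (m + 3)%N ->
  (forall i, (m <= i < b)%N -> F i = if i == j then 0 else c) -> (m <= j < b)%N ->
  \sum_(m <= i < b) F i = c * 2%:R.
Proof.
move=> -> h hj; do 3 (rewrite big_ltn; last lia). rewrite big_geq; last lia.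
rewrite (h m) ?(h m.+1) ?(h m.+2); try lia.
case: ifPn => ?; case: ifPn => ?; case: ifPn => ?; try (exfalso; lia); rewrite mulr_natr mulr2n; ring.
Qed.

Ltac wtac := move=> i hi; rewrite /wf /tri_vx /bipA /bipB;
  repeat (case: ifPn => ?); try (exfalso; lia); reflexivity.
Ltac etac := move=> i hi; (apply/negbTE || idtac); rewrite /Hp_edge /tri_vx /bipA /bipB; lia.

Lemma Hsum (R : rcfType) (r p : nat) (lam N : R) : (1 <= r)%N ->
  N = 3 * p%:R + 9 * r%:R + 9 -> lam * lam = N -> 0 < lam ->
  forall j, (j < p + (3 * r + 6))%N ->
  \sum_(0 <= i < p + (3 * r + 6)) wf r lam N i * (Hp_edge r i j)%:R < lam * wf r lam N j.
Proof.
move=> hr hN hl l0 j hj.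
rewrite (@big_cat_nat _ _ _ 1); [|lia|lia].
rewrite (@big_cat_nat _ _ _ (3*r+1) 1); [|lia|lia].
rewrite (@big_cat_nat _ _ _ (3*r+4) (3*r+1)); [|lia|lia].
have e1 : (3 * r + 1 - 1 = 3 * r)%N by lia.
have e2 : (3 * r + 4 - (3 * r + 1) = 3)%N by lia.
have e3 : (p + (3 * r + 6) - (3 * r + 4) = p + 2)%N by lia.
have r1 : 1 <= r%:R :> R by rewrite (ler_nat R 1 r).
have p0 : 0 <= p%:R :> R by [].
have N18 : 18 <= N by rewrite hN; lra.
have hrl : r%:R * (lam * lam) = r%:R * N by rewrite hl.
case: (boolP (j == 0)%N) => [/eqP ->|jn0].
  rewrite (@sum_piece _ 0 1 _ _ (18%:R * r%:R * lam) false); [|wtac|etac].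
  rewrite (@sum_piece _ 1 (3*r+1) _ _ (3 * N) true); [|wtac|etac].
  rewrite (@sum_piece _ (3*r+1) (3*r+4) _ _ (2 * (N - 1)) true); [|wtac|etac].
  rewrite (@sum_piece _ (3*r+4) _ _ _ (6 * lam) false); [|wtac|etac].
  rewrite /wf eqxx e1 e2 e3 !mulr0 !mulr1 !mul0r ?natrD ?natrM.
  rewrite /=; nra.
case: (boolP (tri_vx r j)) => jt; have jt' := jt; rewrite /tri_vx in jt'.
  rewrite (@sum_piece _ 0 1 _ _ (18%:R * r%:R * lam) true); [|wtac|etac].
  rewrite (@sum_piece _ (3*r+1) (3*r+4) _ _ (2 * (N - 1)) false); [|wtac|etac].
  rewrite (@sum_piece _ (3*r+4) _ _ _ (6 * lam) false); [|wtac|etac].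
  set k := (j.-1 %/ 3)%N.
  rewrite (@big_cat_nat _ _ _ (3*k+1) 1 (3*r+1)); [|rewrite /k /tri_vx in jt *; lia|rewrite /k /tri_vx in jt *; lia].
  rewrite (@big_cat_nat _ _ _ (3*k+4) (3*k+1) (3*r+1)); [|rewrite /k /tri_vx in jt *; lia|rewrite /k /tri_vx in jt *; lia].
  rewrite (@sum_piece _ 1 (3*k+1) _ _ (3 * N) false); [|wtac|rewrite /k in jt *; etac].
  rewrite (@sum_piece _ (3*k+4) (3*r+1) _ _ (3 * N) false); [|wtac|rewrite /k in jt *; etac].
  rewrite (@mid3 _ _ (3*k+1) (3*k+4) j (3 * N)); first last.
  - by rewrite /k /tri_vx in jt *; lia.
  - move=> i hi; rewrite (_ : wf r lam N i = 3 * N); last first.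
      rewrite /k /tri_vx in jt hi *; move: i hi; wtac.
    case: ifPn => h.
    + rewrite (_ : Hp_edge r i j = false) ?mulr0 //; rewrite (eqP h); apply/negbTE.
      rewrite /Hp_edge /tri_vx /bipA /bipB; lia.
    + rewrite (_ : Hp_edge r i j = true) ?mulr1 //; rewrite /k /tri_vx in jt hi *.
      rewrite /Hp_edge /tri_vx /bipA /bipB; lia.
  - by lia.
  rewrite /wf (negbTE jn0) jt e2 e3 !mulr0 !mulr1 !mul0r ?natrD ?natrM.
  rewrite /=; nra.
case: (boolP (bipA r j)) => ja; have ja' := ja; rewrite /bipA in ja'.
  rewrite (@sum_piece _ 0 1 _ _ (18%:R * r%:R * lam) true); [|wtac|etac].
  rewrite (@sum_piece _ 1 (3*r+1) _ _ (3 * N) false); [|wtac|etac].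
  rewrite (@sum_piece _ (3*r+1) (3*r+4) _ _ (2 * (N - 1)) false); [|wtac|etac].
  rewrite (@sum_piece _ (3*r+4) _ _ _ (6 * lam) true); [|wtac|etac].
  rewrite /wf (negbTE jn0) (negbTE jt) ja e1 e2 e3 !mulr0 !mulr1 !mul0r ?natrD ?natrM.
  rewrite /=; nra.
rewrite (@sum_piece _ 0 1 _ _ (18%:R * r%:R * lam) false); [|wtac|etac].
rewrite (@sum_piece _ 1 (3*r+1) _ _ (3 * N) false); [|wtac|etac].
rewrite (@sum_piece _ (3*r+1) (3*r+4) _ _ (2 * (N - 1)) true); [|wtac|etac].
rewrite (@sum_piece _ (3*r+4) _ _ _ (6 * lam) false); [|wtac|etac].
rewrite /wf (negbTE jn0) (negbTE jt) (negbTE ja) e1 e2 e3 !mulr0 !mulr1 !mul0r ?natrD ?natrM.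
rewrite /=; nra.
Qed.


Theorem corollary4p4 (R : rcfType) (r n : nat) :
  (1 <= r)%N -> (3 * r + 6 <= n)%N ->
  spec_radius (adjmx R n (Hp_edge r)) < spec_radius (adjmx R n K3_edge).
Proof.
move=> hr hn.
have [p ->] : exists p, n = (p + (3 * r + 6))%N by exists (n - (3*r+6))%N; rewrite subnK.
pose N : R := 3 * p%:R + 9 * r%:R + 9.
have r1 : 1 <= r%:R :> R by rewrite ler1n.
have p0 : 0 <= p%:R :> R by [].
have N18 : 18 <= N by rewrite /N; lra.
pose lam := Num.sqrt N.
have l0 : 0 < lam by rewrite sqrtr_gt0; lra.
have hl : lam * lam = N by rewrite -expr2 sqr_sqrtr //; lra.
have rootsE : forall m (A : 'M[R]_m) x, (x \in rootsR (char_poly A)) = root (char_poly A) x.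
  by move=> m A x; rewrite -(roots_on_rootsR (monic_neq0 (char_poly_monic A))) in_itv.
apply: (@lt_le_trans _ _ lam).
- rewrite /spec_radius; apply: bigmax_lt => // x; rewrite rootsE -eigenvalue_root_char => hx.
  apply: le_lt_trans (ler_norm x) _.
  apply: (@eig_bound _ _ _ (fun i : 'I_(p + (3 * r + 6)) => wf r lam N i) lam x _ _ _ hx).
  + by move=> i j; rewrite mxE ler0n.
  + move=> i; rewrite /wf; repeat case: ifPn => _; nra.
  + move=> j; under eq_bigr do rewrite mxE.
    rewrite -(big_mkord xpredT (fun i => wf r lam N i * (Hp_edge r i j)%:R)).
    by apply: Hsum.
- rewrite /spec_radius; apply: le_bigmax_seq; rewrite rootsE -eigenvalue_root_char.
  apply/eigenvalueP; exists (\row_(i < p + (3 * r + 6)) (if (i < 3)%N then lam else 3)).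
  + apply/rowP => j; rewrite !mxE.
    under eq_bigr do rewrite !mxE.
    rewrite -(big_mkord xpredT (fun i => (if (i < 3)%N then lam else 3) * (K3_edge i j)%:R)).
    rewrite (@big_cat_nat _ _ _ 3); [|lia|lia].
    have e3 : (p + (3 * r + 6) - 3 = p + 3 * r + 3)%N by lia.
    case: (ltnP j 3) => hj.
    * rewrite (@sum_piece _ 0 3 _ _ lam false); first last.
      - by move=> i hi; apply/negbTE; rewrite /K3_edge; lia.
      - by move=> i hi; rewrite ifT //; lia.
      rewrite (@sum_piece _ 3 _ _ _ 3 true); first last.
      - by move=> i hi; rewrite /K3_edge; lia.
      - by move=> i hi; rewrite ifF //; apply/negbTE; lia.
      rewrite e3 hl /N /= subn0 !natrD ?natrM; ring.
    * rewrite (@sum_piece _ 0 3 _ _ lam true); first last.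
      - by move=> i hi; rewrite /K3_edge; lia.
      - by move=> i hi; rewrite ifT //; lia.
      rewrite (@sum_piece _ 3 _ _ _ 3 false); first last.
      - by move=> i hi; apply/negbTE; rewrite /K3_edge; lia.
      - by move=> i hi; rewrite ifF //; apply/negbTE; lia.
      rewrite /= e3 subn0; ring.
  + apply/eqP => /rowP /(_ (@Ordinal (p + (3 * r + 6)) 0 ltac:(lia))).
    by rewrite !mxE /= => h; move: l0; rewrite h ltxx.
Qed.
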